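(* Let $s,t\in\mathbb{R}^2$ with $D_{st}>0$, let $P_s>0$, $N_0>0$, $\gamma\in(0,\infty)$, $P_r=\gamma P_s$, and $\alpha\ge 2$. For a relay position $r$ in the interior of the segment $[s,t]$ and a power allocation $(P_{sr},P_{srt},P_{rt})\in[0,\infty)^3$ with $P_{sr}+P_{srt}\le P_s$ and $P_{rt}\le P_r$, define $$R_{sr}=\frac{P_{sr}}{D_{sr}^{\alpha}N_0},\quad R_{rt}=\frac{P_{rt}}{D_{rt}^{\alpha}N_0},\quad R_{srt}=\frac{P_{srt}}{D_{st}^{\alpha}N_0},\qquad R_{st}=R_{srt}+\min(R_{sr},R_{rt}).$$ Then the maximum of $R_{st}$ over all such relay positions and feasible power allocations is attained exactly at the relay position with $$D_{sr}^{*}=\frac{D_{st}}{1+\sqrt[\alpha]{\gamma}},\qquad D_{rt}^{*}=\frac{\sqrt[\alpha]{\gamma}\,D_{st}}{1+\sqrt[\alpha]{\gamma}},$$ the maximal value is $$R_{st}^{*}=\frac{P_s}{(D_{sr}^{*})^{\alpha}N_0}=\frac{\gamma P_s}{(D_{rt}^{*})^{\alpha}N_0},$$ and every power allocation achieving $R^*_{st}$ at this position has $P_{srt}=0$, i.e. all the flow is sent over the path $s\to r\to t$.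
   Context: $D_{uv}$ denotes the Euclidean distance between points $u,v\in\mathbb{R}^2$. The model is the low-SNR (wideband) relay channel with source $s$, relay $r$, destination $t$: the source splits its power between a hyperarc to $\{r,t\}$ (rate limited by the farther node $t$, namely $R_{srt}$) and a hyperarc to $r$ (rate $R_{sr}$), and the relay transmits to $t$ with power $P_{rt}$. *)

(* Defs.v *)
From Stdlib Require Import Reals.
Open Scope R_scope.

Definition pt := (R * R)%type.

Definition Dist (u v : pt) : R :=
  sqrt ((fst u - fst v) ^ 2 + (snd u - snd v) ^ 2).

Definition on_open_segment (s t r : pt) : Prop :=
  exists l : R, 0 < l < 1 /\
    r = (fst s + l * (fst t - fst s), snd s + l * (snd t - snd s)).

Definition feasible (Ps Pr Psr Psrt Prt : R) : Prop :=
  0 <= Psr /\ 0 <= Psrt /\ 0 <= Prt /\ Psr + Psrt <= Ps /\ Prt <= Pr.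

Definition rate (N0 alpha P D : R) : R := P / (Rpower D alpha * N0).

Definition Rst (N0 alpha : R) (s r t : pt) (Psr Psrt Prt : R) : R :=
  rate N0 alpha Psrt (Dist s t)
  + Rmin (rate N0 alpha Psr (Dist s r)) (rate N0 alpha Prt (Dist r t)).

(* Main.v *)
Require Import Defs.
From Stdlib Require Import Reals Lra Psatz.
Open Scope R_scope.

Lemma rp_pos x y : 0 < Rpower x y.
Proof. unfold Rpower; apply exp_pos. Qed.

Lemma rp_one y : Rpower 1 y = 1.
Proof. unfold Rpower; rewrite ln_1, Rmult_0_r; apply exp_0. Qed.

Lemma conv_aux a p q r s : 1 < a -> 0 < p -> p < q -> q <= r -> r < s -> p + s = q + r ->
  Rpower q a + Rpower r a < Rpower p a + Rpower s a.
Proof.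
  intros Ha Hp Hpq Hqr Hrs Hsum.
  set (f := fun x => Rpower x a).
  set (f' := fun x => a * Rpower x (a - 1)).
  destruct (MVT_cor2 f f' p q Hpq) as [c1 [E1 Hc1]].
  { intros c Hc. apply derivable_pt_lim_power. lra. }
  destruct (MVT_cor2 f f' r s Hrs) as [c2 [E2 Hc2]].
  { intros c Hc. apply derivable_pt_lim_power. lra. }
  unfold f, f' in *.
  assert (Rpower c1 (a-1) < Rpower c2 (a-1)).
  { apply Rlt_Rpower_l; lra. }
  assert (Hd : q - p = s - r) by lra.
  rewrite <- Hd in E2.
  assert (a * Rpower c1 (a-1) * (q-p) < a * Rpower c2 (a-1) * (q-p)).
  { apply Rmult_lt_compat_r; [lra|]. apply Rmult_lt_compat_l; lra. }
  lra.
Qed.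

Lemma conv a p q r s : 1 < a -> 0 < p -> p < q -> p < r -> q < s -> r < s -> p + s = q + r ->
  Rpower q a + Rpower r a < Rpower p a + Rpower s a.
Proof.
  intros. destruct (Rle_dec q r).
  - apply conv_aux; lra.
  - rewrite Rplus_comm. apply conv_aux; lra.
Qed.

Lemma key a l m : 1 < a -> 0 < l -> l < m -> m < 1 ->
  Rpower (1-m) a * (1 - Rpower l a) < Rpower (1-l) a * (1 - Rpower m a).
Proof.
  intros Ha Hl Hlm Hm.
  set (t := (1-l)/(1-m)).
  set (x := t * m).
  assert (Ht : t * (1 - m) = 1 - l) by (unfold t; field; lra).
  assert (Hx : x * (1 - m) = (1 - l) * m) by (unfold x; rewrite Rmult_assoc, (Rmult_comm m), <- Rmult_assoc, Ht; ring).
  assert (Htp : 1 < t).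
  { unfold t. apply (Rmult_lt_reg_r (1-m)); [lra|]. unfold Rdiv. rewrite Rmult_assoc, Rinv_l; lra. }
  assert (C := conv a l x 1 t Ha Hl).
  rewrite rp_one in C.
  assert (Hlx : l < x) by nra.
  assert (Hxt : x < t) by (unfold x; nra).
  specialize (C Hlx ltac:(lra) Hxt Htp ltac:(nra)).
  assert (E1 : Rpower t a * Rpower (1-m) a = Rpower (1-l) a).
  { rewrite Rpower_mult_distr, Ht; lra. }
  assert (E2 : Rpower x a * Rpower (1-m) a = Rpower (1-l) a * Rpower m a).
  { rewrite !Rpower_mult_distr, Hx; try lra; nra. }
  assert (P := rp_pos (1-m) a).
  nra.
Qed.

Lemma rp_lt1 a l : 0 < a -> 0 < l < 1 -> Rpower l a < 1.
Proof. intros. rewrite <- (rp_one a). apply Rlt_Rpower_l; lra. Qed.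

Lemma core a gamma Ps l ls Psr Psrt Prt : 1 < a -> 0 < Ps -> 0 < l < 1 -> 0 < ls < 1 ->
  Rpower (1 - ls) a = gamma * Rpower ls a ->
  feasible Ps (gamma * Ps) Psr Psrt Prt ->
  let X := Psrt + Rmin (Psr / Rpower l a) (Prt / Rpower (1-l) a) in
  X <= Ps / Rpower ls a /\ (X = Ps / Rpower ls a -> l = ls /\ Psrt = 0).
Proof.
  intros Ha HPs Hl Hls Hg [H1 [H2 [H3 [H4 H5]]]] X.
  set (Lp := Rpower l a) in *. set (Mp := Rpower (1-l) a) in *.
  set (Ls := Rpower ls a) in *. set (Ms := Rpower (1-ls) a) in *.
  assert (HLp : 0 < Lp < 1) by (split; [apply rp_pos | apply rp_lt1; lra]).
  assert (HMp : 0 < Mp < 1) by (split; [apply rp_pos | apply rp_lt1; lra]).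
  assert (HLs : 0 < Ls < 1) by (split; [apply rp_pos | apply rp_lt1; lra]).
  assert (HMs : 0 < Ms) by apply rp_pos.
  set (m := Rmin (Psr / Lp) (Prt / Mp)) in *.
  assert (Hm1 : m <= Psr / Lp) by apply Rmin_l.
  assert (Hm2 : m <= Prt / Mp) by apply Rmin_r.
  assert (Hm1' : m * Lp <= Psr).
  { replace Psr with (Psr / Lp * Lp) by (field; lra). apply Rmult_le_compat_r; lra. }
  assert (Hm2' : m * Mp <= Prt).
  { replace Prt with (Prt / Mp * Mp) by (field; lra). apply Rmult_le_compat_r; lra. }
  assert (HY : Ps / Ls * Ls = Ps) by (field; lra).
  set (Y := Ps / Ls) in *.
  destruct (Rlt_or_le l ls) as [Hlt | Hge].
  -
    assert (K := key a l ls Ha ltac:(lra) Hlt ltac:(lra)).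
    fold Ms Lp Mp Ls in K.
    assert (Hlt' : X < Y).
    { unfold X.
      assert (A1 : Psrt + m <= Ps + m * (1 - Lp)) by nra.
      assert (A2 : m * Mp <= gamma * Ps) by nra.
      assert (A3 : m * (1 - Lp) * Mp <= gamma * Ps * (1 - Lp)) by nra.
      assert (A4 : gamma * Ls * (1 - Lp) < Mp * (1 - Ls)) by (rewrite <- Hg; lra).
      assert (A5 : m * (1 - Lp) * Mp * Ls < Ps * Mp * (1 - Ls)) by nra.
      assert (A6 : m * (1 - Lp) * Ls < Ps * (1 - Ls)).
      { apply (Rmult_lt_reg_r Mp); [lra|]. nra. }
      assert (A7 : (Psrt + m) * Ls < Ps) by nra.
      apply (Rmult_lt_reg_r Ls); [lra|]. lra. }
    split; [lra | intro E; lra].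
  - assert (HLL : Ls <= Lp) by (apply Rle_Rpower_l; lra).
    assert (B1 : (Psrt + m) * Lp <= Psrt + Psr) by nra.
    assert (B2 : (Psrt + m) * Ls <= Ps) by nra.
    assert (BX : X <= Y).
    { unfold X. apply (Rmult_le_reg_r Ls); [lra|]. lra. }
    split; [exact BX|].
    intro E.
    destruct (Rle_lt_or_eq_dec _ _ Hge) as [Hgt | Heq].
    + exfalso.
      assert (HLL' : Ls < Lp) by (apply Rlt_Rpower_l; lra).
      assert (B3 : (Psrt + m) * Lp <= Ps) by lra.
      assert (B4 : Y * Lp <= Ps) by (rewrite <- E; exact B3).
      nra.
    + split; [lra|].
      destruct (Rle_lt_or_eq_dec _ _ H2) as [Hp | Hp]; [|lra].
      exfalso.
      assert (B5 : (Psrt + m) * Lp < Psrt + Psr) by nra.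
      assert (B6 : (Psrt + m) * Ls < Ps) by nra.
      assert (B7 : Y * Ls < Ps) by (rewrite <- E; exact B6).
      lra.
Qed.

Lemma dist_seg s t r l : r = (fst s + l * (fst t - fst s), snd s + l * (snd t - snd s)) -> 0 < l < 1 ->
  Dist s r = l * Dist s t /\ Dist r t = (1 - l) * Dist s t.
Proof.
  intros -> Hl. unfold Dist; cbn [fst snd].
  split.
  - replace ((fst s - (fst s + l * (fst t - fst s))) ^ 2 + (snd s - (snd s + l * (snd t - snd s))) ^ 2)
      with ((l*l) * ((fst s - fst t) ^ 2 + (snd s - snd t) ^ 2)) by ring.
    idtac.
    rewrite sqrt_mult_alt by nra. rewrite sqrt_square by lra. reflexivity.
  - replace ((fst s + l * (fst t - fst s) - fst t) ^ 2 + (snd s + l * (snd t - snd s) - snd t) ^ 2)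
      with (((1-l)*(1-l)) * ((fst s - fst t) ^ 2 + (snd s - snd t) ^ 2)) by ring.
    rewrite sqrt_mult_alt by nra. rewrite sqrt_square by lra. reflexivity.
Qed.

Lemma rmin_div u v K : 0 < K -> Rmin (u / K) (v / K) = Rmin u v / K.
Proof.
  intros HK. destruct (Rle_dec u v).
  - rewrite (Rmin_left u v) by lra. apply Rmin_left.
    apply Rmult_le_compat_r; [left; apply Rinv_0_lt_compat; lra | lra].
  - rewrite (Rmin_right u v) by lra. apply Rmin_right.
    apply Rmult_le_compat_r; [left; apply Rinv_0_lt_compat; lra | lra].
Qed.

Lemma rst_eq N0 a s r t l Psr Psrt Prt : 0 < N0 -> 0 < Dist s t -> 0 < l < 1 ->
  Dist s r = l * Dist s t -> Dist r t = (1 - l) * Dist s t ->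
  Rst N0 a s r t Psr Psrt Prt =
  (Psrt + Rmin (Psr / Rpower l a) (Prt / Rpower (1-l) a)) / (Rpower (Dist s t) a * N0).
Proof.
  intros HN HD Hl E1 E2. unfold Rst, rate. rewrite E1, E2.
  rewrite <- !Rpower_mult_distr by lra.
  assert (P1 := rp_pos l a). assert (P2 := rp_pos (1-l) a). assert (P3 := rp_pos (Dist s t) a).
  set (K := Rpower (Dist s t) a * N0).
  assert (HK : 0 < K) by (unfold K; nra).
  replace (Psr / (Rpower l a * Rpower (Dist s t) a * N0)) with ((Psr / Rpower l a) / K) by (unfold K; field; lra).
  replace (Prt / (Rpower (1-l) a * Rpower (Dist s t) a * N0)) with ((Prt / Rpower (1-l) a) / K) by (unfold K; field; lra).
  rewrite rmin_div by lra. field. lra.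
Qed.

Theorem lemma2 (s t : pt) (Ps N0 gamma alpha : R) :
  0 < Dist s t -> 0 < Ps -> 0 < N0 -> 0 < gamma -> 2 <= alpha ->
  let g := Rpower gamma (1 / alpha) in
  let Dsr := Dist s t / (1 + g) in
  let Drt := g * Dist s t / (1 + g) in
  let Rstar := Ps / (Rpower Dsr alpha * N0) in
  Rstar = gamma * Ps / (Rpower Drt alpha * N0) /\
  (forall (r : pt) (Psr Psrt Prt : R),
      on_open_segment s t r -> feasible Ps (gamma * Ps) Psr Psrt Prt ->
      Rst N0 alpha s r t Psr Psrt Prt <= Rstar) /\
  (exists (r : pt) (Psr Psrt Prt : R),
      on_open_segment s t r /\ feasible Ps (gamma * Ps) Psr Psrt Prt /\
      Dist s r = Dsr /\ Dist r t = Drt /\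
      Rst N0 alpha s r t Psr Psrt Prt = Rstar) /\
  (forall (r : pt) (Psr Psrt Prt : R),
      on_open_segment s t r -> feasible Ps (gamma * Ps) Psr Psrt Prt ->
      Rst N0 alpha s r t Psr Psrt Prt = Rstar ->
      Dist s r = Dsr /\ Dist r t = Drt /\ Psrt = 0).
Proof.
  intros HD HPs HN Hgam Ha g Dsr Drt Rstar.
  assert (Hg : 0 < g) by apply rp_pos.
  assert (Hga : Rpower g alpha = gamma).
  { unfold g. rewrite Rpower_mult. replace (1 / alpha * alpha) with 1 by (field; lra).
    apply Rpower_1; lra. }
  set (D := Dist s t) in *.
  set (ls := 1 / (1 + g)).
  assert (Hls : 0 < ls < 1).
  { unfold ls. split; [apply Rdiv_lt_0_compat; lra|].
    apply (Rmult_lt_reg_r (1+g)); [lra|]. unfold Rdiv. rewrite Rmult_assoc, Rinv_l; lra. }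
  assert (EDsr : Dsr = ls * D) by (unfold Dsr, ls; field; lra).
  assert (EDrt : Drt = (1 - ls) * D) by (unfold Drt, ls; field; lra).
  assert (E1ls : 1 - ls = g * ls) by (unfold ls; field; lra).
  assert (HMs : Rpower (1 - ls) alpha = gamma * Rpower ls alpha).
  { rewrite E1ls, <- Rpower_mult_distr, Hga by lra. reflexivity. }
  set (E := Rpower D alpha).
  assert (HE : 0 < E) by apply rp_pos.
  assert (HLs := rp_pos ls alpha).
  assert (ERstar : Rstar = (Ps / Rpower ls alpha) / (E * N0)).
  { unfold Rstar. rewrite EDsr, <- Rpower_mult_distr by lra. fold E. field. lra. }
  assert (Ha1 : 1 < alpha) by lra.
  split.
  { rewrite ERstar, EDrt, <- Rpower_mult_distr, HMs by lra. fold E. field. lra. }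
  split.
  { intros r Psr Psrt Prt [l [Hl Hr]] Hf.
    destruct (dist_seg s t r l Hr Hl) as [E1 E2]. fold D in E1, E2.
    rewrite (rst_eq N0 alpha s r t l Psr Psrt Prt HN HD Hl E1 E2). fold D E.
    destruct (core alpha gamma Ps l ls Psr Psrt Prt Ha1 HPs Hl Hls HMs Hf) as [C _].
    rewrite ERstar. apply Rmult_le_compat_r; [left; apply Rinv_0_lt_compat; nra | exact C]. }
  split.
  { set (r := (fst s + ls * (fst t - fst s), snd s + ls * (snd t - snd s))).
    destruct (dist_seg s t r ls eq_refl Hls) as [E1 E2]. fold D in E1, E2.
    exists r, Ps, 0, (gamma * Ps).
    split; [exists ls; split; [exact Hls | reflexivity]|].
    split; [unfold feasible; repeat split; nra|].
    split; [rewrite E1, EDsr; reflexivity|].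
    split; [rewrite E2, EDrt; reflexivity|].
    rewrite (rst_eq N0 alpha s r t ls Ps 0 (gamma*Ps) HN HD Hls E1 E2). fold D E.
    rewrite ERstar, HMs.
    replace (gamma * Ps / (gamma * Rpower ls alpha)) with (Ps / Rpower ls alpha) by (field; lra).
    rewrite Rmin_left by lra. f_equal. ring. }
  { intros r Psr Psrt Prt [l [Hl Hr]] Hf Heq.
    destruct (dist_seg s t r l Hr Hl) as [E1 E2]. fold D in E1, E2.
    rewrite (rst_eq N0 alpha s r t l) in Heq by (auto; lra). fold D E in Heq.
    destruct (core alpha gamma Ps l ls Psr Psrt Prt Ha1 HPs Hl Hls HMs Hf) as [_ C].
    rewrite ERstar in Heq.
    assert (HK : 0 < E * N0) by nra.
    destruct C as [-> ->].
    { apply (Rmult_eq_reg_r (/ (E * N0))); [exact Heq | apply Rgt_not_eq, Rinv_0_lt_compat; exact HK]. }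
    split; [rewrite E1, EDsr; reflexivity|].
    split; [rewrite E2, EDrt; reflexivity| reflexivity]. }
Qed.
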